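(* Let $n,k\geq 1$ be integers with $n+k$ odd and let $A_1,\dots,A_k,B_1,\dots,B_k\in\mathbb{R}$. For $\alpha\in\mathbb{C}$ put $a_i=A_i+B_i\alpha$ ($i=1,\dots,k$) and $$O_\alpha(z)=z^n\,\frac{a_k+a_{k-1}z+\dots+a_1 z^{k-1}+z^k}{1+a_1 z+\dots+a_{k-1}z^{k-1}+a_k z^k},$$ considered for those $\alpha$ with $a_k\neq0$, $1+a_1+\dots+a_k\neq0$ and $1+\sum_{j=1}^k(-1)^ja_j\neq 0$; for such $\alpha$, $z=-1$ is a fixed point of $O_\alpha$. Define $$C=n+k+\sum_{j=1}^k(-1)^j(n+k-2j)A_j,\quad D=\sum_{j=1}^k(-1)^j(n+k-2j)B_j,\quad C'=1+\sum_{j=1}^k(-1)^jA_j,\quad D'=\sum_{j=1}^k(-1)^jB_j,$$ and, when $D^2-D'^2\neq0$, $c=(CD-C'D')/(D^2-D'^2)$ and $r=(C'D-CD')/(D^2-D'^2)$. Then: \begin{enumerate} \item If $D^2-D'^2\neq0$: (i) $z=-1$ is indifferent on the circle $S:\ |\alpha+c|=|r|$; (ii) $z=-1$ is attracting inside $S$ if $D^2-D'^2>0$ and outside $S$ if $D^2-D'^2<0$; (iii) $z=-1$ is repelling outside $S$ if $D^2-D'^2>0$ and inside $S$ if $D^2-D'^2<0$. \item If $D^2-D'^2=0$: (a) if $D=D'\neq0$: $z=-1$ is indifferent if $C=C'$; $z=-1$ is attracting if either $\mathrm{Re}(\alpha)<-\frac{C+C'}{2D}$ and $D(C-C')>0$,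 or $\mathrm{Re}(\alpha)>-\frac{C+C'}{2D}$ and $D(C-C')<0$; $z=-1$ is repelling otherwise. (b) if $D=-D'\neq0$: $z=-1$ is indifferent if $C=-C'$; $z=-1$ is attracting if either $\mathrm{Re}(\alpha)<\frac{C'-C}{2D}$ and $D(C+C')>0$, or $\mathrm{Re}(\alpha)>\frac{C'-C}{2D}$ and $D(C+C')<0$; $z=-1$ is repelling otherwise. (c) if $D=D'=0$: $z=-1$ is indifferent if $|C|=|C'|$, attracting if $|C|<|C'|$, and repelling if $|C|>|C'|$. \end{enumerate} Moreover, if $\alpha=-C/D$, the fixed point $z=-1$ is superattracting.
   Context: For a fixed point $z_0$ of a rational map $R$ with multiplier $\lambda=R'(z_0)$, $z_0$ is attracting if $|\lambda|<1$, superattracting if $\lambda=0$, repelling if $|\lambda|>1$, and indifferent if $|\lambda|=1$. *)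

(* Defs.v *)
From HB Require Import structures.
From mathcomp Require Import all_boot all_order all_algebra.
From mathcomp Require Import complex.
From mathcomp Require Import all_classical all_reals all_analysis.
Import Order.TTheory GRing.Theory Num.Theory.
Import numFieldNormedType.Exports.

Set Implicit Arguments.
Unset Strict Implicit.
Unset Printing Implicit Defensive.

Local Open Scope complex_scope.
Local Open Scope ring_scope.

Section Defs.
Variable R : realType.

Definition acoef (A B : nat -> R) (alpha : R[i]) (j : nat) : R[i] :=
  (A j)%:C + (B j)%:C * alpha.

Definition qcoef (A B : nat -> R) (alpha : R[i]) (j : nat) : R[i] :=
  if j == 0%N then 1 else acoef A B alpha j.

Definition Omap (n k : nat) (A B : nat -> R) (alpha : R[i]) (z : R[i]) : R[i] :=
  z ^+ n * (\sum_(j < k.+1) qcoef A B alpha (k - j) * z ^+ j)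
         / (\sum_(j < k.+1) qcoef A B alpha j * z ^+ j).

Definition multiplier (f : R[i] -> R[i]) (z0 : R[i]) : R[i] :=
  @derive1 (R[i])^o (R[i])^o f z0.

Definition fixed_point (f : R[i] -> R[i]) (z0 : R[i]) : Prop := f z0 = z0.

Definition attracting (lam : R[i]) : Prop := `|lam| < 1.
Definition superattracting (lam : R[i]) : Prop := lam = 0.
Definition repelling (lam : R[i]) : Prop := 1 < `|lam|.
Definition indifferent (lam : R[i]) : Prop := `|lam| = 1.

Definition Ccst (n k : nat) (A : nat -> R) : R :=
  (n + k)%:R + \sum_(1 <= j < k.+1) (-1) ^+ j * ((n + k)%:R - 2 * j%:R) * A j.
Definition Dcst (n k : nat) (B : nat -> R) : R :=
  \sum_(1 <= j < k.+1) (-1) ^+ j * ((n + k)%:R - 2 * j%:R) * B j.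
Definition C'cst (k : nat) (A : nat -> R) : R :=
  1 + \sum_(1 <= j < k.+1) (-1) ^+ j * A j.
Definition D'cst (k : nat) (B : nat -> R) : R :=
  \sum_(1 <= j < k.+1) (-1) ^+ j * B j.

End Defs.

(* Main.v *)
Require Import Defs.
From HB Require Import structures.
From mathcomp Require Import all_boot all_order all_algebra.
From mathcomp Require Import complex.
From mathcomp Require Import all_classical all_reals all_analysis.
From mathcomp Require Import ring lra.
Import Order.TTheory GRing.Theory Num.Theory.
Import numFieldNormedType.Exports.
Local Open Scope complex_scope.
Local Open Scope ring_scope.

Section S.
Variable R : realType.
Local Notation K := (R[i]^o).

Lemma is_derive_mono (c : K) (j : nat) (x : K) :
  is_derive x (1 : K) (fun z : K => c * z ^+ j) (c * (j%:R * x ^+ j.-1)).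
Proof.
have h := @is_deriveX K K id j x 1 1 (@is_derive_id _ _ x 1).
have h2 := @is_deriveZ K K K _ c x 1 _ h.
apply: is_derive_eq.
  have -> : (fun z : K => c * z ^+ j) = c \*: (id ^+ j) by apply/funext => z /=; rewrite exprfctE.
  exact: h2.
by rewrite /= [_%:A]mulr1.
Qed.

Lemma is_derive_poly_sum (c : nat -> K) (m : nat) (x : K) :
  is_derive x (1 : K) (fun z : K => \sum_(j < m) c j * z ^+ j)
    (\sum_(j < m) c j * (j%:R * x ^+ j.-1)).
Proof.
have -> : (fun z : K => \sum_(j < m) c j * z ^+ j) = \sum_(j < m) (fun z : K => c j * z ^+ j).
  by apply/funext => z; rewrite fct_sumE.
apply: is_derive_sum => j; exact: is_derive_mono.
Qed.
Lemma is_derive_div (f g : K -> K) (x df dg : K) :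
  is_derive x (1:K) f df -> is_derive x (1:K) g dg -> g x != 0 ->
  is_derive x (1:K) (fun z : K => f z / g z) ((df * g x - f x * dg) / (g x) ^+ 2).
Proof.
move=> Hf Hg gx0.
have hV : is_derive x (1:K) (fun z : K => (g z)^-1) (- (g x) ^- 2 *: dg).
  apply: DeriveDef; first exact: derivableV (@ex_derive _ _ _ _ _ _ _ Hg).
  by rewrite deriveV // ?derive_val //; exact: ex_derive.
have -> : (fun z : K => f z / g z) = f * (fun z : K => (g z)^-1) by apply/funext.
have HM := (@is_deriveM K K f (fun z : K => (g z)^-1) x 1 df _ Hf hV). apply: (is_derive_eq HM).
rewrite /GRing.scale /=. field. exact: gx0.
Qed.

Lemma derive1_val (f : K -> K) (x df : K) : is_derive x (1:K) f df -> @derive1 K K f x = df.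
Proof. by move=> H; rewrite derive1E derive_val. Qed.

Lemma is_derive_mul (f g : K -> K) (x df dg : K) :
  is_derive x (1:K) f df -> is_derive x (1:K) g dg ->
  is_derive x (1:K) (fun z : K => f z * g z) (df * g x + f x * dg).
Proof.
move=> Hf Hg.
have -> : (fun z : K => f z * g z) = f * g by apply/funext.
have HM := (@is_deriveM K K f g x 1 df dg Hf Hg).
apply: (is_derive_eq HM).
rewrite /GRing.scale /=; ring.
Qed.

Lemma is_derive_pow (j : nat) (x : K) :
  is_derive x (1 : K) (fun z : K => z ^+ j) (j%:R * x ^+ j.-1).
Proof.
have -> : (fun z : K => z ^+ j) = (fun z : K => 1 * z ^+ j) by apply/funext => z; rewrite mul1r.
by apply: is_derive_eq; [exact: is_derive_mono | rewrite mul1r].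
Qed.

Arguments is_derive_mul {f g x df dg}.
Arguments is_derive_div {f g x df dg}.

Lemma sum_rev (F : nat -> K) (k : nat) :
  \sum_(j < k.+1) F (k - j)%N = \sum_(j < k.+1) F j.
Proof.
rewrite [RHS](reindex_inj rev_ord_inj); apply: eq_bigr => j _ /=.
by rewrite subSS.
Qed.

Lemma sign_sub (k j : nat) : (j <= k)%N ->
  (-1) ^+ (k - j) = (-1) ^+ k * (-1) ^+ j :> K.
Proof.
by move=> jk; rewrite -signr_odd oddB // signr_addb !signr_odd.
Qed.

Lemma sign_pred (m : nat) : m%:R * (-1) ^+ m.-1 = - (m%:R * (-1) ^+ m) :> K.
Proof. by case: m => [|m] /=; [rewrite mul0r oppr0 | rewrite exprS; ring]. Qed.


Lemma lam_formula (n k : nat) (A B : nat -> R) (alpha : R[i]) :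
  (1 <= n)%N -> odd (n + k) ->
  let q := qcoef A B alpha in
  let S0 := \sum_(j < k.+1) q j * (-1) ^+ j in
  let N := \sum_(j < k.+1) ((n + k)%:R - 2 * j%:R) * (q j * (-1) ^+ j) in
  S0 != 0 ->
  fixed_point (Omap n k A B alpha) (-1) /\
  multiplier (Omap n k A B alpha) (-1) = N / S0.
Proof.
move=> n1 nk q S0 N S00.
pose S1 := \sum_(j < k.+1) j%:R * (q j * (-1) ^+ j).
pose e : K := (-1) ^+ k.
have hP : \sum_(j < k.+1) q (k - j)%N * (-1 : K) ^+ j = e * S0.
  rewrite -(sum_rev (fun j => q (k - j)%N * (-1) ^+ j)) /S0 mulr_sumr.
  apply: eq_bigr => j _; rewrite subKn ?leq_ord // sign_sub ?leq_ord // /e; ring.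
have hP' : \sum_(j < k.+1) q (k - j)%N * (j%:R * (-1 : K) ^+ j.-1) = - e * (k%:R * S0 - S1).
  rewrite -(sum_rev (fun j => q (k - j)%N * (j%:R * (-1) ^+ j.-1))) /S0 /S1.
  rewrite mulrBr !mulr_sumr -sumrB; apply: eq_bigr => j _ /=.
  rewrite subKn ?leq_ord // sign_pred sign_sub ?leq_ord // natrB ?leq_ord // /e; ring.
have hQ : \sum_(j < k.+1) q j * (-1 : K) ^+ j = S0 by [].
have hQ' : \sum_(j < k.+1) q j * (j%:R * (-1 : K) ^+ j.-1) = - S1.
  rewrite /S1 -sumrN; apply: eq_bigr => j _; rewrite sign_pred; ring.
have hN : N = (n + k)%:R * S0 - 2 * S1.
  rewrite /N /S0 /S1 !mulr_sumr -sumrB; apply: eq_bigr => j _; ring.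
have ex : e * (-1) ^+ n = -1.
  move: nk; rewrite /e -(signr_odd _ k) -(signr_odd _ n) oddD.
  by case: (odd k); case: (odd n) => //= _; rewrite ?expr1 ?expr0 ?mulr1 ?mul1r.
have hn : (-1 : K) ^+ n = - (-1) ^+ n.-1 by rewrite -{1}(prednK n1) exprS mulN1r.
have Hd := is_derive_div (is_derive_mul (is_derive_pow n (-1))
   (is_derive_poly_sum (fun j => q (k - j)%N) k.+1 (-1)))
   (is_derive_poly_sum q k.+1 (-1)).
rewrite /= hQ hP hP' hQ' in Hd.
split.
  rewrite /fixed_point /Omap -/q hP hQ.
  by rewrite mulrA [_ * e]mulrC ex mulN1r mulNr divff.
rewrite /multiplier (derive1_val _ _ _ (Hd S00)) hN.
rewrite hn in ex *.
have ff : (-1 : K) ^+ n.-1 * (-1) ^+ n.-1 = 1.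
  by rewrite -exprD -signr_odd oddD addbb.
have ee : e = (-1) ^+ n.-1.
  have ef : e * (-1) ^+ n.-1 = 1 by apply: oppr_inj; rewrite -mulrN ex.
  by rewrite -[e]mulr1 -[X in e * X]ff mulrA ef mul1r.
rewrite ee -signr_odd; case: (odd n.-1) => /=; rewrite ?expr0 ?expr1; field; exact: S00.
Qed.

Lemma split0 (F : nat -> R[i]) (k : nat) :
  \sum_(j < k.+1) F j = F 0%N + \sum_(1 <= j < k.+1) F j.
Proof. by rewrite -(big_mkord xpredT F) (big_ltn (ltn0Sn k)). Qed.

Lemma S0_hyp (k : nat) (A B : nat -> R) (alpha : R[i]) :
  \sum_(j < k.+1) qcoef A B alpha j * (-1) ^+ j =
  1 + \sum_(1 <= j < k.+1) (-1) ^+ j * acoef A B alpha j.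
Proof.
rewrite (split0 (fun j => qcoef A B alpha j * (-1) ^+ j)) /qcoef /= expr0 mulr1; congr (_ + _).
apply: eq_big_nat => j /andP[j1 _]; rewrite ifN; [exact: mulrC | by case: j j1].
Qed.

Lemma S0_CD (k : nat) (A B : nat -> R) (alpha : R[i]) :
  \sum_(j < k.+1) qcoef A B alpha j * (-1) ^+ j =
  (C'cst k A)%:C + (D'cst k B)%:C * alpha.
Proof.
rewrite S0_hyp /C'cst /D'cst rmorphD rmorph1 !rmorph_sum mulr_suml -addrA -big_split /=.
congr (_ + _); apply: eq_big_nat => j /andP[j1 _].
rewrite /acoef !rmorphM rmorphXn rmorphN1; ring.
Qed.

Lemma N_CD (n k : nat) (A B : nat -> R) (alpha : R[i]) :
  \sum_(j < k.+1) ((n + k)%:R - 2 * j%:R) * (qcoef A B alpha j * (-1) ^+ j) =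
  (Ccst n k A)%:C + (Dcst n k B)%:C * alpha.
Proof.
rewrite (split0 (fun j => ((n + k)%:R - 2 * j%:R) * (qcoef A B alpha j * (-1) ^+ j))).
rewrite /Ccst /Dcst [in RHS]rmorphD !rmorph_sum mulr_suml -[in RHS]addrA -big_split /=.
congr (_ + _); first by rewrite /qcoef /= expr0 !mulr1 mulr0 subr0 rmorph_nat.
rewrite /qcoef.
apply: eq_big_nat => j /andP[j1 _]; rewrite ifN; last by case: j j1.
rewrite /acoef !rmorphM rmorphXn rmorphN1 rmorphB rmorph_nat rmorphM rmorph_nat; ring.
Qed.
Lemma Re_lin (x y a b : R) : complex.Re (x%:C + y%:C * (a +i* b)) = x + y * a.
Proof. by rewrite /= mul0r subr0. Qed.
Lemma Im_lin (x y a b : R) : complex.Im (x%:C + y%:C * (a +i* b)) = y * b.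
Proof. by rewrite /= mul0r addr0 add0r. Qed.

Lemma normC_lt (u v : R[i]) :
  (`|u| < `|v|) = (complex.Re u ^+ 2 + complex.Im u ^+ 2 < complex.Re v ^+ 2 + complex.Im v ^+ 2).
Proof. by rewrite -ltcR !add_Re2_Im2 ltr_pXn2r // nnegrE normr_ge0. Qed.

Lemma normC_eq (u v : R[i]) :
  (`|u| = `|v|) <-> (complex.Re u ^+ 2 + complex.Im u ^+ 2 = complex.Re v ^+ 2 + complex.Im v ^+ 2).
Proof.
split=> h.
  by apply: complexI; rewrite !add_Re2_Im2 h.
have H2 : `|u| ^+ 2 = `|v| ^+ 2 by rewrite -!add_Re2_Im2 h.
apply/eqP; rewrite -(@eqrXn2 _ 2 _ _ (ltn0Sn 1) (normr_ge0 u) (normr_ge0 v)) H2.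
exact: eqxx.
Qed.

Lemma lam_lt (N M : R[i]) : M != 0 -> (`|N / M| < 1) = (`|N| < `|M|).
Proof. by move=> M0; rewrite normrM normfV ltr_pdivrMr ?normr_gt0 // mul1r. Qed.
Lemma lam_gt (N M : R[i]) : M != 0 -> (1 < `|N / M|) = (`|M| < `|N|).
Proof. by move=> M0; rewrite normrM normfV ltr_pdivlMr ?normr_gt0 // mul1r. Qed.
Lemma lam_eq (N M : R[i]) : M != 0 -> `|N| = `|M| -> `|N / M| = 1.
Proof. by move=> M0 h; rewrite normrM normfV h divff // normr_eq0. Qed.

Lemma Re_lin' (x y : R) (z : R[i]) : complex.Re (x%:C + y%:C * z) = x + y * complex.Re z.
Proof. by case: z => a b; rewrite Re_lin. Qed.
Lemma Im_lin' (x y : R) (z : R[i]) : complex.Im (x%:C + y%:C * z) = y * complex.Im z.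
Proof. by case: z => a b; rewrite Im_lin. Qed.
Lemma Re_addc (z : R[i]) (c : R) : complex.Re (z + c%:C) = complex.Re z + c.
Proof. by case: z => a b /=. Qed.
Lemma Im_addc (z : R[i]) (c : R) : complex.Im (z + c%:C) = complex.Im z.
Proof. by case: z => a b /=; rewrite addr0. Qed.
Lemma Re_C (c : R) : complex.Re (c%:C) = c. Proof. by []. Qed.
Lemma Im_C (c : R) : complex.Im (c%:C) = 0. Proof. by []. Qed.
End S.

Theorem proposition3p6 (R : realType) (n k : nat) (A B : nat -> R)
    (alpha : R[i]) :
  (1 <= n)%N -> (1 <= k)%N -> odd (n + k) ->
  acoef A B alpha k != 0 ->
  1 + \sum_(1 <= j < k.+1) acoef A B alpha j != 0 ->
  1 + \sum_(1 <= j < k.+1) (-1) ^+ j * acoef A B alpha j != 0 ->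
  let O := Omap n k A B alpha in
  let lam := multiplier O (-1) in
  let C := Ccst n k A in
  let D := Dcst n k B in
  let C' := C'cst k A in
  let D' := D'cst k B in
  let Delta := D ^+ 2 - D' ^+ 2 in
  fixed_point O (-1) /\
  (Delta != 0 ->
     let c := (C * D - C' * D') / Delta in
     let r := (C' * D - C * D') / Delta in
     (`|alpha + c%:C| = `|r%:C| -> indifferent lam) /\
     (`|alpha + c%:C| < `|r%:C| ->
        (0 < Delta -> attracting lam) /\ (Delta < 0 -> repelling lam)) /\
     (`|r%:C| < `|alpha + c%:C| ->
        (0 < Delta -> repelling lam) /\ (Delta < 0 -> attracting lam))) /\
  (Delta = 0 ->
     (D = D' -> D != 0 ->
        let x := - ((C + C') / (2 * D)) in
        (C = C' -> indifferent lam) /\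
        ((complex.Re alpha < x /\ 0 < D * (C - C')) \/ (x < complex.Re alpha /\ D * (C - C') < 0) ->
           attracting lam) /\
        ((x < complex.Re alpha /\ 0 < D * (C - C')) \/ (complex.Re alpha < x /\ D * (C - C') < 0) ->
           repelling lam)) /\
     (D = - D' -> D != 0 ->
        let x := (C' - C) / (2 * D) in
        (C = - C' -> indifferent lam) /\
        ((complex.Re alpha < x /\ 0 < D * (C + C')) \/ (x < complex.Re alpha /\ D * (C + C') < 0) ->
           attracting lam) /\
        ((x < complex.Re alpha /\ 0 < D * (C + C')) \/ (complex.Re alpha < x /\ D * (C + C') < 0) ->
           repelling lam)) /\
     (D = 0 -> D' = 0 ->
        (`|C| = `|C'| -> indifferent lam) /\
        (`|C| < `|C'| -> attracting lam) /\
        (`|C'| < `|C| -> repelling lam))) /\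
  (D != 0 -> alpha = (- (C / D))%:C -> superattracting lam).
Proof.
move=> n1 k1 nk hk hs hS0 O lam C D C' D' Delta.
have S0ne : \sum_(j < k.+1) qcoef A B alpha j * (-1) ^+ j != 0 by rewrite S0_hyp.
have [fp hl] := @lam_formula R n k A B alpha n1 nk S0ne.
rewrite N_CD S0_CD in hl.
have M0 : (C'%:C + D'%:C * alpha) != 0 by rewrite /C' /D' -S0_CD.
have hlam : lam = (C%:C + D%:C * alpha) / (C'%:C + D'%:C * alpha) by rewrite /lam /O hl.
set a := complex.Re alpha; set b := complex.Im alpha.
have hatt : (C + D * a) ^+ 2 + (D * b) ^+ 2 < (C' + D' * a) ^+ 2 + (D' * b) ^+ 2 ->
    attracting lam.
  by move=> h; rewrite /attracting hlam lam_lt // normC_lt !Re_lin' !Im_lin'.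
have hrep : (C' + D' * a) ^+ 2 + (D' * b) ^+ 2 < (C + D * a) ^+ 2 + (D * b) ^+ 2 ->
    repelling lam.
  by move=> h; rewrite /repelling hlam lam_gt // normC_lt !Re_lin' !Im_lin'.
have hind : (C + D * a) ^+ 2 + (D * b) ^+ 2 = (C' + D' * a) ^+ 2 + (D' * b) ^+ 2 ->
    indifferent lam.
  move=> h; rewrite /indifferent hlam; apply: lam_eq => //.
  by apply/normC_eq; rewrite !Re_lin' !Im_lin'.
split; first exact: fp.
have e0 : (0 : R) ^+ 2 = 0 by rewrite expr2 mulr0.
split.
  move=> hD c r.
  have key : Delta * ((a + c) ^+ 2 + b ^+ 2 - r ^+ 2) =
      (C + D * a) ^+ 2 + (D * b) ^+ 2 - ((C' + D' * a) ^+ 2 + (D' * b) ^+ 2).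
    rewrite /c /r /Delta; field; exact: hD.
  split.
    move=> /normC_eq; rewrite Re_addc Im_addc Re_C Im_C -/a -/b e0 addr0 => h.
    apply: hind; apply/eqP; rewrite -subr_eq0 -key h subrr mulr0 //.
  split.
    rewrite normC_lt Re_addc Im_addc Re_C Im_C -/a -/b e0 addr0 => h.
    split=> hs'; [apply: hatt | apply: hrep]; nra.
  rewrite normC_lt Re_addc Im_addc Re_C Im_C -/a -/b e0 addr0 => h.
  split=> hs'; [apply: hrep | apply: hatt]; nra.
split.
  move=> hD0; split.
    move=> hDD hD x.
    have key : (C + D * a) ^+ 2 + (D * b) ^+ 2 - ((C' + D' * a) ^+ 2 + (D' * b) ^+ 2) =
        2 * (D * (C - C')) * (a - x).
      rewrite /x -hDD; field; exact: hD.
    split.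
      move=> hc; apply: hind; apply/eqP; rewrite -subr_eq0 key hc subrr !(mulr0, mul0r) //.
    split.
      by case=> [[h1 h2]|[h1 h2]]; apply: hatt; nra.
    by case=> [[h1 h2]|[h1 h2]]; apply: hrep; nra.
  split.
    move=> hDD hD x.
    have hD' : D' = - D by rewrite hDD opprK.
    have key : (C + D * a) ^+ 2 + (D * b) ^+ 2 - ((C' + D' * a) ^+ 2 + (D' * b) ^+ 2) =
        2 * (D * (C + C')) * (a - x).
      rewrite /x hD'; field; exact: hD.
    split.
      move=> hc; apply: hind; apply/eqP; rewrite -subr_eq0 key hc addNr !(mulr0, mul0r) //.
    split.
      by case=> [[h1 h2]|[h1 h2]]; apply: hatt; nra.
    by case=> [[h1 h2]|[h1 h2]]; apply: hrep; nra.
  move=> hD hD'.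
  have key : (C + D * a) ^+ 2 + (D * b) ^+ 2 - ((C' + D' * a) ^+ 2 + (D' * b) ^+ 2) =
      C ^+ 2 - C' ^+ 2 by rewrite hD hD'; ring.
  have k1' := real_normK (num_real C); have k2' := real_normK (num_real C').
  have g1 := normr_ge0 C; have g2 := normr_ge0 C'.
  split.
    move=> h; apply: hind; apply/eqP; rewrite -subr_eq0 key -k1' -k2' h subrr //.
  split.
    by move=> h; apply: hatt; nra.
  by move=> h; apply: hrep; nra.
move=> hD ha; rewrite /superattracting hlam ha -rmorphM -rmorphD.
have -> : C + D * - (C / D) = 0 by field; exact: hD.
by rewrite rmorph0 mul0r.
Qed.
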